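(* Let $U$ be a unitary on $\mathbb C^2\otimes\mathbb C^2$, $\alpha$ a full-rank density operator on $\mathbb C^2$ and $|\beta\rangle\in\mathbb C^2$ a unit vector. If there exist density operators $\alpha',\beta'$ on $\mathbb C^2$ with $U(\alpha\otimes|\beta\rangle\langle\beta|)U^\dagger=\alpha'\otimes\beta'$, then $U$ is a generalized thermal unitary.
   Context: A unitary $U$ on $\mathcal H_A\otimes\mathcal H_B$ is a generalized thermal unitary if there exist Hermitian operators $H_A,H_A'$ on $\mathcal H_A$ and $H_B,H_B'$ on $\mathcal H_B$, with at least one of $H_A,H_B$ not proportional to the identity, such that $U(H_A\otimes\mathbb 1+\mathbb 1\otimes H_B)U^\dagger=H_A'\otimes\mathbb 1+\mathbb 1\otimes H_B'$. *)

(* Defs.v *)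
From HB Require Import structures.
From mathcomp Require Import all_boot all_order all_algebra.
From mathcomp Require Import complex mxtens spectral.
From mathcomp Require Import reals.
Set Implicit Arguments.
Unset Strict Implicit.
Unset Printing Implicit Defensive.
Import Order.TTheory GRing.Theory Num.Theory.
Local Open Scope ring_scope.

Section QDefs.
Variable C : numClosedFieldType.

Definition adj {m n} (M : 'M[C]_(m, n)) : 'M[C]_(n, m) := map_mx Num.conj (M ^T).

Definition hermitian_mx {n} (A : 'M[C]_n) : Prop := adj A = A.

Definition psd_mx {n} (A : 'M[C]_n) : Prop :=
  hermitian_mx A /\ forall v : 'cV[C]_n, 0 <= (adj v *m A *m v) 0 0.

Definition density_op {n} (A : 'M[C]_n) : Prop := psd_mx A /\ \tr A = 1.

Definition full_rank {n} (A : 'M[C]_n) : Prop := \rank A = n.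

Definition unit_vector {n} (v : 'cV[C]_n) : Prop := (adj v *m v) 0 0 = 1.

Definition ketbra {n} (v : 'cV[C]_n) : 'M[C]_n := v *m adj v.

Definition unitary_mx {n} (U : 'M[C]_n) : Prop := U \is unitarymx.

Definition gen_thermal_unitary {m n} (U : 'M[C]_(m * n)) : Prop :=
  exists (HA HA' : 'M[C]_m) (HB HB' : 'M[C]_n),
    [/\ hermitian_mx HA /\ hermitian_mx HA', hermitian_mx HB /\ hermitian_mx HB',
        (~ is_scalar_mx HA \/ ~ is_scalar_mx HB) &
        U *m (tensmx HA 1%:M + tensmx 1%:M HB) *m adj U
        = tensmx HA' 1%:M + tensmx 1%:M HB'].
End QDefs.

(* Main.v *)
Require Import Defs.
From HB Require Import structures.
From mathcomp Require Import all_boot all_order all_algebra.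
From mathcomp Require Import complex mxtens.
From mathcomp Require Import reals.
From mathcomp Require Import ring spectral.
Import Order.TTheory GRing.Theory Num.Theory.
Local Open Scope ring_scope.
Set Implicit Arguments.
Unset Strict Implicit.

Section H.
Variable C : numClosedFieldType.

Lemma adj_mul m n p (A : 'M[C]_(m, n)) (B : 'M[C]_(n, p)) :
  adj (A *m B) = adj B *m adj A.
Proof. by rewrite /adj trmx_mul map_mxM. Qed.

Lemma adjK m n (A : 'M[C]_(m, n)) : adj (adj A) = A.
Proof. by apply/matrixP=> i j; rewrite !mxE conjCK. Qed.

Lemma adj1 n : adj (1%:M : 'M[C]_n) = 1%:M.
Proof. by rewrite /adj trmx1 map_mx1. Qed.

Lemma adjB n (A B : 'M[C]_n) : adj (A - B) = adj A - adj B.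
Proof. by apply/matrixP=> i j; rewrite !mxE rmorphB. Qed.

Lemma adj_tens m n p q (A : 'M[C]_(m, n)) (B : 'M[C]_(p, q)) :
  adj (A *t B) = adj A *t adj B.
Proof. by apply/matrixP=> i j; rewrite !mxE rmorphM. Qed.

Lemma tr_tens m n (A : 'M[C]_m) (B : 'M[C]_n) : \tr (A *t B) = \tr A * \tr B.
Proof. by rewrite /mxtrace mulr_sum; apply: eq_bigr => k _; rewrite mxE. Qed.

Lemma tr_adj0 n (D : 'M[C]_n) : \tr (D *m adj D) = 0 -> D = 0.
Proof.
rewrite /mxtrace => H.
have H1 : forall i, \sum_j D i j * (D i j)^* = 0.
  move=> i; move/eqP: H; rewrite psumr_eq0 => [/allP Hi|i0 _].
    have := Hi i; rewrite mem_index_enum => /(_ isT) /eqP; rewrite mxE => E.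
    rewrite -[RHS]E; apply: eq_bigr => j _; by rewrite !mxE.
  rewrite mxE; apply: sumr_ge0 => j _; rewrite !mxE; exact: mul_conjC_ge0.
apply/matrixP => i j; rewrite mxE.
move/eqP: (H1 i); rewrite psumr_eq0 => [/allP Hi|j0 _]; last exact: mul_conjC_ge0.
by have := Hi j; rewrite mem_index_enum => /(_ isT); rewrite mul_conjC_eq0 => /eqP.
Qed.

Lemma det2 (A : 'M[C]_2) : \det A = A 0 0 * A 1 1 - A 0 1 * A 1 0.
Proof.
rewrite (expand_det_row _ 0) !big_ord_recl big_ord0 /cofactor !det_mx11 !mxE /=.
have E1 : lift (0 : 'I_2) 0 = 1 by apply: val_inj.
have E2 : lift (ord0 : 'I_2) ord0 = 1 by apply: val_inj.
have E3 : lift (1 : 'I_2) (0 : 'I_1) = 0 by apply: val_inj.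
have E4 : (ord0 : 'I_2) = 0 by apply: val_inj.
rewrite ?E1 ?E2 ?E3 ?E4.
by rewrite /bump /= expr0 expr1 !mul1r addr0 mulN1r mulrN.
Qed.

Lemma ord2_cases (i : 'I_2) : i = 0 \/ i = 1.
Proof. by case: i => [[|[|m]] Hm] //; [left|right]; apply: val_inj. Qed.

Lemma sum2 (F : 'I_2 -> C) : \sum_(i < 2) F i = F 0 + F 1.
Proof. by rewrite !big_ord_recl big_ord0 addr0; congr (F _ + F _); apply: val_inj. Qed.

Lemma tr2 (A : 'M[C]_2) : \tr A = A 0 0 + A 1 1.
Proof. by rewrite /mxtrace sum2. Qed.

Lemma CH2 (A : 'M[C]_2) : \tr A = 1 -> \det A = 0 -> A *m A = A.
Proof.
rewrite tr2 det2 => Ht /eqP; rewrite subr_eq0 => /eqP Hd.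
have H11 : A 1 1 = 1 - A 0 0 by rewrite -Ht addrAC subrr add0r.
apply/matrixP => i j; rewrite mxE sum2.
case: (ord2_cases i) => ->; case: (ord2_cases j) => ->.
- by rewrite -Hd H11; ring.
- by rewrite H11; ring.
- by rewrite H11; ring.
- by rewrite mulrC -Hd H11; ring.
Qed.

Lemma adj0 m n : adj (0 : 'M[C]_(m, n)) = 0.
Proof. by apply/matrixP=> i j; rewrite !mxE conjC0. Qed.

Lemma main (U : 'M[C]_(2 * 2)) (alpha : 'M[C]_2) (beta : 'cV[C]_2)
  (alpha' beta' : 'M[C]_2) :
  U *m adj U = 1%:M -> \rank alpha = 2 -> (adj beta *m beta) 0 0 = 1 ->
  hermitian_mx alpha' -> \tr alpha' = 1 ->
  hermitian_mx beta' -> \tr beta' = 1 ->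
  U *m tensmx alpha (ketbra beta) *m adj U = tensmx alpha' beta' ->
  gen_thermal_unitary (m := 2) (n := 2) U.
Proof.
move=> HU1 Hra Hb Ha' Hta' Hb' Htb' HM.
have HU2 : adj U *m U = 1%:M by apply: mulmx1C.
set Pb := ketbra beta in HM.
have Hbb : adj beta *m beta = 1%:M by rewrite [LHS]mx11_scalar Hb.
have HPb : Pb *m Pb = Pb.
  by rewrite /Pb /ketbra mulmxA -(mulmxA beta) Hbb mulmx1.
have trPb : \tr Pb = 1.
  by rewrite /Pb /ketbra mxtrace_mulC Hbb mxtrace1.
have adjPb : adj Pb = Pb by rewrite /Pb /ketbra adj_mul adjK.
set M := tensmx alpha' beta' in HM.
set P : 'M[C]_(2 * 2) := 1%:M *t Pb.
set Q := U *m P *m adj U.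
have ua : alpha \in unitmx by rewrite -row_free_unit /row_free Hra.
set X := U *m (invmx alpha *t 1%:M) *m adj U.
have HQ : Q = X *m M.
  rewrite -HM /X /Q !mulmxA -(mulmxA _ (adj U) U) HU2 mulmx1.
  by rewrite -[in RHS](mulmxA U) tensmx_mul mulVmx // mul1mx.
have adjQ : adj Q = Q.
  by rewrite /Q /P !adj_mul adjK adj_tens adj1 adjPb mulmxA.
have HQQ : Q *m Q = Q.
  rewrite /Q !mulmxA -(mulmxA _ (adj U) U) HU2 mulmx1.
  by rewrite -(mulmxA U) /P tensmx_mul mulmx1 HPb.
have trQ : \tr Q = 2%:R.
  by rewrite /Q mxtrace_mulC mulmxA HU2 mul1mx /P tr_tens mxtrace1 trPb mulr1.
have key : forall T : 'M[C]_(2 * 2), adj T = T -> T *m T = T -> \tr T = 2%:R ->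
    M *m T = M -> Q = T.
  move=> T HT HTT trT HMT.
  have HQT : Q *m T = Q by rewrite HQ -mulmxA HMT.
  have HTQ : T *m Q = Q by rewrite -{1}HT -adjQ -adj_mul HQT.
  have HD : (T - Q) *m (T - Q) = T - Q.
    by rewrite mulmxBl !mulmxBr HTT HTQ HQT HQQ subrr subr0.
  have HDa : adj (T - Q) = T - Q by rewrite adjB HT adjQ.
  apply/eqP; rewrite eq_sym -subr_eq0; apply/eqP; apply: tr_adj0.
  by rewrite HDa HD linearB /= trT trQ subrr.
have PbNs : ~ is_scalar_mx Pb.
  move/is_scalar_mxP => [a Ha].
  have Ha2 : a * a = a.
    by move: HPb; rewrite Ha -scalar_mxM => /matrixP /(_ 0 0); rewrite !mxE /=.
  have Ha1 : a *+ 2 = 1 by rewrite -trPb Ha mxtrace_scalar.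
  have : a * (a - 1) = 0 by rewrite mulrBr Ha2 mulr1 subrr.
  move/eqP; rewrite mulf_eq0 subr_eq0 => /orP [] /eqP Ha0.
    by move: Ha1; rewrite Ha0 mul0rn => /eqP; rewrite eq_sym oner_eq0.
  by move: Ha1; rewrite Ha0 => /eqP; rewrite pnatr_eq1.
have dich : \det alpha' = 0 \/ \det beta' = 0.
  have [da|da] := eqVneq (\det alpha') 0; first by left.
  have [db|db] := eqVneq (\det beta') 0; first by right.
  exfalso.
  have uM : M \in unitmx.
    by apply: tensmx_unit; rewrite // unitmxE unitfE.
  have uaU : adj U \in unitmx by case/mulmx1_unit: HU2.
  have uU : U \in unitmx by case/mulmx1_unit: HU2.
  have HN : alpha *t Pb = adj U *m M *m U.
    by rewrite -HM !mulmxA HU2 mul1mx -mulmxA HU2 mulmx1.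
  have uN : alpha *t Pb \in unitmx by rewrite HN !unitmx_mul uaU uM uU.
  have H0 : (alpha *t Pb) *m (1%:M *t (1%:M - Pb)) = 0.
    by rewrite tensmx_mul mulmx1 mulmxBr HPb mulmx1 subrr tensmx0.
  have H1 : (1%:M *t (1%:M - Pb) : 'M[C]_(2 * 2)) = 0.
    by rewrite -(mulKmx uN (1%:M *t (1%:M - Pb))) H0 mulmx0.
  have := congr1 mxtrace H1.
  rewrite tr_tens linearB /= !mxtrace1 trPb linear0 => /eqP.
  have E : (2 : C) - 1 = 1 by rewrite -(natrB _ (isT : (1 <= 2)%N)).
  by rewrite E mulr1 pnatr_eq0.
have hPb : hermitian_mx Pb by [].
have h0 : hermitian_mx (0 : 'M[C]_2) by rewrite /hermitian_mx adj0.
case: dich => [da|db].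
- have HAA : alpha' *m alpha' = alpha' by apply: CH2.
  have HQT : Q = alpha' *t 1%:M.
    apply: key.
    - by rewrite adj_tens adj1 Ha'.
    - by rewrite tensmx_mul HAA mulmx1.
    - by rewrite tr_tens mxtrace1 Hta' mul1r.
    - by rewrite /M tensmx_mul HAA mulmx1.
  exists 0, alpha', Pb, 0; split => //; first by right.
  by rewrite tens0mx add0r tensmx0 addr0.
- have HBB : beta' *m beta' = beta' by apply: CH2.
  have HQT : Q = 1%:M *t beta'.
    apply: key.
    - by rewrite adj_tens adj1 Hb'.
    - by rewrite tensmx_mul HBB mulmx1.
    - by rewrite tr_tens mxtrace1 Htb' mulr1.
    - by rewrite /M tensmx_mul HBB mulmx1.
  exists 0, 0, Pb, beta'; split => //; first by right.
  by rewrite !tens0mx !add0r.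
Qed.

End H.

Unset Implicit Arguments.
Set Strict Implicit.

Theorem theorem8 (R : realType) (U : 'M[R[i]]_(2 * 2))
  (alpha : 'M[R[i]]_2) (beta : 'cV[R[i]]_2) :
  unitary_mx U -> density_op alpha -> full_rank alpha -> unit_vector beta ->
  (exists alpha' beta' : 'M[R[i]]_2,
     [/\ density_op alpha', density_op beta' &
         U *m tensmx alpha (ketbra beta) *m adj U = tensmx alpha' beta']) ->
  gen_thermal_unitary (m := 2) (n := 2) U.
Proof.
move=> hU _ hr hb [a' [b'] [[[ha' _] ta'] [[hb' _] tb'] HM]].
apply: (main _ hr hb ha' ta' hb' tb' HM).
exact: (unitarymxP hU).
Qed.
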